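(* Let $n\ge 1$, let $V_1,\dots,V_n>0$, $R_1,\dots,R_n>0$, $p\in(0,1)$ and $z>0$. Then the system of equations in unknowns $a_0,b_0$ $$\frac{1-p}{p}b_0=\sum_{i=1}^n\frac{1+\frac{b_0}{a_0R_i}}{V_i-\frac{1}{a_0}-\frac{1}{b_0}},\qquad \frac{1}{zp}b_0-a_0=\sum_{i=1}^n\frac{1+\frac{a_0R_i}{b_0}}{V_i-\frac{1}{a_0}-\frac{1}{b_0}}$$ has a positive solution with $a_0>0$ and $b_0>0$.
   Context: These are the Hamling equations for log odds ratios: $R_i$ are reported odds ratios with reported variances $V_i$ (of the log odds ratios), $p$ is the ratio of unexposed controls to total controls, $z$ is the ratio of total controls to total cases, and $a_0,b_0$ are the reference-group pseudo-cases and pseudo-non-cases. *)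

(* Defs.v *)
From mathcomp Require Import all_boot all_order all_algebra.
From mathcomp Require Export reals.
Set Implicit Arguments. Unset Strict Implicit. Unset Printing Implicit Defensive.
Import Order.TTheory GRing.Theory Num.Theory.
Local Open Scope ring_scope.

Definition hden (R : realType) (Vi a0 b0 : R) : R := Vi - a0^-1 - b0^-1.

(* Main.v *)
Require Import Defs.
From mathcomp Require Import all_boot all_order all_algebra.
From mathcomp Require Import reals.
From mathcomp Require Import boolp classical_sets topology normedtype realfun.
From mathcomp Require Import ring lra.
Import Order.TTheory GRing.Theory Num.Theory.
Import numFieldNormedType.Exports.
Local Open Scope classical_set_scope.
Local Open Scope ring_scope.

Lemma cont_sum (R : realType) n (F : 'I_n -> R -> R) x :
  (forall i, {for x, continuous (F i)}) ->
  {for x, continuous (fun s => \sum_(i < n) F i s)}.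
Proof.
move=> H; apply: (@cvg_big R _ +%R 0 predT add_continuous) => // i _; exact: H.

Qed.

Lemma cont_inv (R : realType) (a x : R) : x < a ->
  {for x, continuous (fun s => (a - s)^-1)}.
Proof.
move=> xa; apply: continuousV; first by rewrite subr_eq0 gt_eqF.
apply: continuousB; [exact: cst_continuous | exact: cvg_id].
Qed.

Lemma quad_aux (R : realType) (E B K r : R) : B + r != 0 ->
  E*(2*K/(B+r))^+2 + B*(2*K/(B+r)) - K = K*(4*E*K + B^+2 - r^+2)/(B+r)^+2.
Proof. by move=> h; field. Qed.

Lemma quad_root (R: realType) (P W k s : R) : 0 <= P -> 0 <= W -> 0 < k -> 0 < s ->
  let B := 1 + P*s + k in let D := B^+2 + 4*(W-P)*(s*k) in
  let v := 2*(s*k)/(B + Num.sqrt D) in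
  [/\ 0 < v, v < s & (W-P)*v^+2 + B*v - s*k = 0].
Proof.
move=> P0 W0 k0 s0 B D v.
have B0 : 0 < B by rewrite /B; nra.
have DE : D = (k - (1 + P*s))^+2 + 4*k*(1 + W*s) by rewrite /D /B; ring.
have hpos : 0 < 4*k*(1 + W*s) by apply: mulr_gt0; [lra | nra].
have Dpos : 0 < D by rewrite DE; apply: ltr_wpDl; first exact: sqr_ge0.

set r := Num.sqrt D.
have r0 : 0 <= r by exact: sqrtr_ge0.
have rr : r ^+ 2 = D by rewrite sqr_sqrtr // ltW.
have w0 : 0 < B + r by lra.
split.
- by rewrite /v divr_gt0 //; nra.
- rewrite /v ltr_pdivrMr //.
  have : k - (1 + P*s) < r.
    rewrite ltNge; apply/negP => H.
    have : r ^+ 2 <= (k - (1 + P*s))^+2 by rewrite ler_pXn2r ?nnegrE //; lra.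
    rewrite rr DE; lra.
  move=> h; rewrite -subr_gt0.
  have -> : s*(B+r) - 2*(s*k) = s*(r - (k - (1+P*s))) by rewrite /B; ring.
  by apply: mulr_gt0 => //; lra.
- have wn : B + r != 0 by rewrite gt_eqF.
  rewrite /v quad_aux //.
  by rewrite rr /D; apply/eqP; rewrite mulf_eq0 mulf_eq0; apply/orP; left; apply/orP; right; apply/eqP; ring.
Qed.

Definition Pf {R : realType} {n} (V : 'I_n -> R) s := \sum_(i < n) (V i - s)^-1.
Definition Qf {R : realType} {n} (V OR : 'I_n -> R) s := \sum_(i < n) (OR i)^-1 * (V i - s)^-1.
Definition Wf {R : realType} {n} (V OR : 'I_n -> R) s := \sum_(i < n) OR i * (V i - s)^-1.
Definition vf {R : realType} {n} (V OR : 'I_n -> R) (k s : R) :=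
  2*(s*k)/((1 + Pf V s*s + k) + Num.sqrt ((1 + Pf V s*s + k)^+2 + 4*(Wf V OR s - Pf V s)*(s*k))).
Definition phi {R : realType} {n} (V OR : 'I_n -> R) (k s : R) :=
  Pf V s * vf V OR k s + Qf V OR s * (s - vf V OR k s).

Lemma Pf_ge0 {R : realType} {n} (V : 'I_n -> R) s : (forall i, s < V i) -> 0 <= Pf V s.
Proof. by move=> h; apply: sumr_ge0 => i _; rewrite invr_ge0 subr_ge0 ltW. Qed.

Lemma cont_phi (R : realType) n (V OR : 'I_n -> R) (k x : R) :
  0 <= x -> (forall i, x < V i) -> 0 < k -> {for x, continuous (phi V OR k)}.
Proof.
move=> x0 xV k0.
have HP : {for x, continuous (Pf V)} by apply: cont_sum => i; exact: cont_inv.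
have HQ : {for x, continuous (Qf V OR)}.
  apply: cont_sum => i; apply: (@continuousM _ _ (fun _ => _) (fun s => _)).
    exact: cst_continuous.
  exact: cont_inv.
have HW : {for x, continuous (Wf V OR)}.
  apply: cont_sum => i; apply: (@continuousM _ _ (fun _ => _) (fun s => _)).
    exact: cst_continuous.
  exact: cont_inv.
have Hid : {for x, continuous (fun s : R => s)} by exact: cvg_id.
have Hc : forall c : R, {for x, continuous (fun _ : R => c)} by move=> c; exact: cst_continuous.
have HB : {for x, continuous (fun s => 1 + Pf V s * s + k)}.
  apply: continuousD; last exact: Hc.
  apply: continuousD; first exact: Hc.
  exact: continuousM.
have HD : {for x, continuous (fun s => (1 + Pf V s*s + k)^+2 + 4*(Wf V OR s - Pf V s)*(s*k))}.
  apply: continuousD.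
    exact: (@continuousM _ _ (fun s => 1 + Pf V s * s + k) (fun s => 1 + Pf V s * s + k)).
  apply: (@continuousM _ _ (fun s => 4 * (Wf V OR s - Pf V s)) (fun s => s * k)).
    apply: (@continuousM _ _ (fun _ => 4) (fun s => (Wf V OR s - Pf V s))) => //.
    exact: continuousB.
  exact: (@continuousM _ _ (fun s => s) (fun _ => k)).
have HS := continuous_comp HD (@sqrt_continuous R _).
have Hv : {for x, continuous (vf V OR k)}.
  rewrite /vf; apply: continuousM.
    apply: continuousM; first exact: Hc.
    by apply: continuousM; [exact: Hid | exact: Hc].
  apply: continuousV.
    rewrite gt_eqF //; have := @Pf_ge0 _ _ V x xV.
    have := sqrtr_ge0 ((1 + Pf V x * x + k)^+2 + 4*(Wf V OR x - Pf V x)*(x*k)); nra.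
  exact: continuousD.
apply: continuousD.
  exact: (@continuousM _ _ (Pf V) (vf V OR k)).
apply: (@continuousM _ _ (Qf V OR) (fun s => s - vf V OR k s)) => //.
exact: continuousB.
Qed.

Lemma sum_ge_term {R : realType} {n} (F : 'I_n -> R) j :
  (forall i, 0 <= F i) -> F j <= \sum_(i < n) F i.
Proof.
move=> h; rewrite (bigD1 j) //= lerDl; apply: sumr_ge0 => i _; exact: h.
Qed.

Lemma Wf_ge0 {R : realType} {n} (V OR : 'I_n -> R) s :
  (forall i, 0 < OR i) -> (forall i, s < V i) -> 0 <= Wf V OR s.
Proof.
move=> h1 h; apply: sumr_ge0 => i _; apply: mulr_ge0; first exact: ltW.
by rewrite invr_ge0 subr_ge0 ltW.
Qed.

Lemma Qf_ge0 {R : realType} {n} (V OR : 'I_n -> R) s :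
  (forall i, 0 < OR i) -> (forall i, s < V i) -> 0 <= Qf V OR s.
Proof.
move=> h1 h; apply: sumr_ge0 => i _; apply: mulr_ge0; first by rewrite invr_ge0 ltW.
by rewrite invr_ge0 subr_ge0 ltW.
Qed.

Lemma s1_bound {R : realType} (m c C : R) : 0 < m -> 0 < c -> 0 < C ->
  m*c/(2*(c+C)) * (C * (m/2)^-1) < c.
Proof.
move=> m0 c0 C0.
have -> : m*c/(2*(c+C)) * (C * (m/2)^-1) = c*C/(c+C).
  by field; rewrite ?gt_eqF //; lra.
rewrite ltr_pdivrMr; last lra.
nra.
Qed.

Lemma low_phi {R : realType} (P Q v s T : R) : 0 <= P -> 0 <= Q -> 0 <= v -> v <= s ->
  P + Q <= T -> P * v + Q * (s - v) <= s * T.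
Proof. move=> *; nra. Qed.

Lemma high_phi {R : realType} (P Q v s Rr m c : R) : 0 < Rr -> 0 < m -> 0 < c ->
  let del := m / (2 * (1 + Rr) * (c + 1)) in
  del^-1 <= P -> Rr^-1 * del^-1 <= Q -> 0 <= v -> v <= s -> m/2 <= s ->
  c < P * v + Q * (s - v).
Proof.
move=> R0 m0 c0 del hP hQ v0 vs ms.
have d0 : 0 < del by rewrite /del divr_gt0 //; nra.
set x := del^-1. set y := Rr^-1.
have x0 : 0 < x by rewrite invr_gt0.
have y0 : 0 < y by rewrite invr_gt0.
have hy : Rr * y = 1 by rewrite /y mulfV // gt_eqF.
have h1 : x * (v + y * (s - v)) <= P * v + Q * (s - v).
  have : x * v <= P * v by apply: ler_wpM2r.
  have : x * y * (s - v) <= Q * (s - v) by rewrite mulrC [X in _ <= X]mulrC; apply: ler_wpM2l; [lra | by rewrite mulrC].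
  lra.
have h2 : s / (1 + Rr) <= v + y * (s - v).
  rewrite ler_pdivrMr; last lra.
  have : 0 <= Rr * v by nra.
  have : 0 <= y * (s - v) by nra.
  nra.
have h3 : x * ((m/2) / (1 + Rr)) = c + 1.
  rewrite /x /del; field; rewrite ?gt_eqF //; nra.
have h4 : (m/2) / (1 + Rr) <= s / (1 + Rr) by rewrite ler_pM2r // invr_gt0; lra.
have : x * ((m/2) / (1 + Rr)) <= x * (v + y * (s - v)).
  rewrite ler_pM2l //; lra.
lra.
Qed.

Theorem theorem4 (R : realType) (n : nat) (V OR : 'I_n -> R) (p z : R) :
  (1 <= n)%N ->
  (forall i, 0 < V i) -> (forall i, 0 < OR i) ->
  0 < p -> p < 1 -> 0 < z ->
  exists a0 b0 : R,
    [/\ 0 < a0, 0 < b0,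
        (forall i, hden (V i) a0 b0 != 0),
        (1 - p) / p * b0
          = \sum_(i < n) (1 + b0 / (a0 * OR i)) / hden (V i) a0 b0
      & (z * p)^-1 * b0 - a0
          = \sum_(i < n) (1 + a0 * OR i / b0) / hden (V i) a0 b0].
Proof.
move=> n1 V0 OR0 p0 p1 z0.
set k := (z * p)^-1. set c := (1 - p) / p.
have k0 : 0 < k by rewrite /k invr_gt0 mulr_gt0.
have c0 : 0 < c by rewrite /c divr_gt0 // subr_gt0.
case: (@arg_minP _ _ _ (Ordinal n1) xpredT V isT) => i0 _ Hi0.
set m := V i0.
have m0 : 0 < m by exact: V0.
have mV : forall i, m <= V i by move=> i; exact: Hi0.
set C := \sum_(i < n) (1 + (OR i)^-1).
have C0 : 0 < C.
  apply: (lt_le_trans _ (@sum_ge_term _ _ (fun i => 1 + (OR i)^-1) i0 _)).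
    by rewrite ltr_pwDl // invr_ge0 ltW.
  by move=> i; rewrite addr_ge0 // invr_ge0 ltW.
set s1 := m * c / (2 * (c + C)).
set Rr := OR i0.
have Rr0 : 0 < Rr by exact: OR0.
set del := m / (2 * (1 + Rr) * (c + 1)).
have d0 : 0 < del by rewrite /del divr_gt0 //; nra.
set s2 := m - del.
have s10 : 0 < s1 by rewrite /s1 divr_gt0 //; nra.
have s1m : s1 <= m / 2.
  rewrite /s1 ler_pdivrMr; last nra.
  have -> : m / 2 * (2 * (c + C)) = m * (c + C) by field.
  by rewrite ler_pM2l //; lra.
have ds : del <= m / 2.
  rewrite /del ler_pdivrMr; last nra.
  have -> : m / 2 * (2 * (1 + Rr) * (c + 1)) = m * ((1 + Rr) * (c + 1)) by field.
  rewrite -{1}(mulr1 m) ler_pM2l //; nra.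
have s12 : s1 <= s2 by rewrite /s2; lra.
have Hv : forall s, 0 < s -> s < m ->
    [/\ 0 < vf V OR k s, vf V OR k s < s &
     (Wf V OR s - Pf V s) * (vf V OR k s)^+2 + (1 + Pf V s * s + k) * vf V OR k s - s*k = 0].
  move=> s s0 sm.
  have sV : forall i, s < V i by move=> i; exact: (lt_le_trans sm (mV i)).
  have := @quad_root R _ _ _ _ (@Pf_ge0 _ _ V s sV) (@Wf_ge0 _ _ V OR s OR0 sV) k0 s0.
  by [].
have Hlow : phi V OR k s1 < c.
  have sV : forall i, s1 < V i by move=> i; apply: (lt_le_trans _ (mV i)); lra.
  have [v0 vs _] := Hv s1 s10 (ltac:(lra)).
  have hb := @s1_bound R m c C m0 c0 C0.
  apply: (le_lt_trans _ hb).
  apply: low_phi => //; [exact: Pf_ge0 | exact: Qf_ge0 | exact: ltW | exact: ltW |].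
  rewrite /Pf /Qf -big_split /= /C mulr_suml; apply: ler_sum => i _.
  rewrite -{1}(mul1r (V i - s1)^-1) -mulrDl; apply: ler_wpM2l.
    by rewrite addr_ge0 // invr_ge0 ltW.
  rewrite lef_pV2 ?posrE; [|rewrite subr_gt0 //|]; last by apply: divr_gt0.
  by have := mV i; lra.
have Hhigh : c < phi V OR k s2.
  have s20 : 0 < s2 by rewrite /s2; lra.
  have s2m : s2 < m by rewrite /s2; lra.
  have sV : forall i, s2 < V i by move=> i; exact: (lt_le_trans s2m (mV i)).
  have [v0 vs _] := Hv s2 s20 s2m.
  have e : V i0 - s2 = del by rewrite /s2 /m; ring.
  apply: (@high_phi R _ _ _ _ Rr m c Rr0 m0 c0); [ | | exact: ltW | exact: ltW | rewrite /s2; lra].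
    rewrite /Pf -/del -e; apply: (sum_ge_term (fun i => (V i - s2)^-1) i0) => i.
    by rewrite invr_ge0 subr_ge0 ltW.
  rewrite /Qf -/del -e; apply: (sum_ge_term (fun i => (OR i)^-1 * (V i - s2)^-1) i0) => i.
  by rewrite mulr_ge0 // invr_ge0 ?subr_ge0 ltW.
have [s sin hs] : exists2 s, s \in `[s1, s2] & phi V OR k s = c.
  apply: IVT => //.
    apply: continuous_in_subspaceT => x; rewrite inE /= in_itv /= => /andP[h1 h2].
    apply: cont_phi; [lra | | exact: k0].
    by move=> i; apply: (lt_le_trans _ (mV i)); rewrite /s2 in h2; lra.
  rewrite ge_min ?le_max; apply/andP; split; apply/orP; [left|right]; exact: ltW.
move: sin; rewrite in_itv /= => /andP[hs1 hs2].
have s0 : 0 < s by lra.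
have sm : s < m by rewrite /s2 in hs2; lra.
have sV : forall i, s < V i by move=> i; exact: (lt_le_trans sm (mV i)).
have [v0 vs hq] := Hv s s0 sm.
move: hs hq; rewrite /phi.
set v := vf V OR k s.
have hd : forall i, V i - (s - v)^-1^-1 - v^-1^-1 = V i - s.
  by move=> i; rewrite !invrK; ring.
have dn : forall i, V i - s != 0 by move=> i; rewrite subr_eq0 gt_eqF.
have vn : v != 0 by rewrite gt_eqF.
have svn : s - v != 0 by rewrite subr_eq0 gt_eqF.
move=> hs hq.
exists (s - v)^-1, v^-1; split.
- by rewrite invr_gt0 subr_gt0.
- by rewrite invr_gt0.
- by move=> i; rewrite /hden hd.
- rewrite /hden.
  under eq_bigr => i _ do rewrite hd.
  have -> : \sum_(i < n) (1 + v^-1 / ((s - v)^-1 * OR i)) / (V i - s)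
      = Pf V s + (s - v) / v * Qf V OR s.
    rewrite /Pf /Qf mulr_sumr -big_split /=; apply: eq_bigr => i _.
    have := dn i; have := OR0 i; move: (V i - s) (OR i) => d r dn0 r0.
    by field; rewrite r0 vn svn (gt_eqF dn0).
  rewrite -hs; field; done.
- rewrite /hden.
  under eq_bigr => i _ do rewrite hd.
  have -> : \sum_(i < n) (1 + (s - v)^-1 * OR i / v^-1) / (V i - s)
      = Pf V s + v / (s - v) * Wf V OR s.
    rewrite /Pf /Wf mulr_sumr -big_split /=; apply: eq_bigr => i _.
    have := dn i; move: (V i - s) (OR i) => d r dn0.
    by field; rewrite dn0 vn svn.
  move: hq; move: (Pf V s) (Wf V OR s) => P W hq.
  have -> : k * v^-1 - (s - v)^-1 = P + v / (s - v) * W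
     - ((W - P) * v^+2 + (1 + P * s + k) * v - s * k) / (v * (s - v)).
    by field; rewrite vn svn.
  by rewrite hq mul0r subr0.
Qed.
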